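(* Let $a>0$ and let $f$ be a $2a$-periodic function on $\mathbb{R}$ that is $C^\infty$ everywhere except at the points $2a\mathbb{Z}$, and suppose there is $\delta>0$ and a function $\varphi$ analytic on $(-\delta,\delta)$ such that $f(x)=\varphi(x)/x^2$ for $0<|x|<\delta$. Let $I[f]:=\int_{-a}^{a}f(x)\,\mathrm{d}x$, understood as a Hadamard finite-part integral. For $n\in\mathbb{Z}^+$ let $h=a/n$ and $T_n[f]:=h\sum_{i=-n,\ i\neq 0}^{n-1}f(ih)$. Then for every $\mu>0$, $$I[f]=T_n[f]-\frac{\pi^2}{3h}\varphi(0)+\frac{\varphi''(0)\,h}{2}+O(h^\mu)\qquad (h\to 0).$$
   Context: The Hadamard finite-part integral of $\varphi(x)/x^2$ over an interval containing $0$ is the finite part of $\int_{|x|>\epsilon}$ as $\epsilon\to0^+$, i.e. the limit after discarding the term divergent like $2\varphi(0)/\epsilon$. *)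

(* Defs.v *)
From Stdlib Require Import Reals.
From Coquelicot Require Import Coquelicot.
Open Scope R_scope.

Definition analytic_on (phi : R -> R) (delta : R) : Prop :=
  forall x0, Rabs x0 < delta ->
    exists r, 0 < r /\ exists c : nat -> R,
      forall x, Rabs (x - x0) < r -> is_pseries c (x - x0) (phi x).

Definition smooth_off_2aZ (f : R -> R) (a : R) : Prop :=
  forall x, (forall k : Z, x <> 2 * a * IZR k) -> forall m : nat, ex_derive_n f m x.

Definition is_hadamard_fp (f : R -> R) (a phi0 I : R) : Prop :=
  filterlim (fun eps => RInt f (- a) (- eps) + RInt f eps a - 2 * phi0 / eps)
    (at_right 0) (locally I).

Definition trap_sum (f : R -> R) (a : R) (n : nat) : R :=
  let h := a / INR n in
  h * (sum_n_m (fun k => f (- (INR k * h))) 1 n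
       + sum_n_m (fun k => f (INR k * h)) 1 (n - 1)).

(* Main.v *)
Require Import Defs.
From Stdlib Require Import Reals.
From Coquelicot Require Import Coquelicot.
From Stdlib Require Import Lra Lia FunctionalExtensionality ZArith.
Open Scope R_scope.

Definition smk (k:nat) (U : R -> Prop) (f : R -> R) :=
  forall m x, (m <= k)%nat -> U x -> ex_derive (Derive_n f m) x.

Lemma Derive_n_S_fun (f : R -> R) m x : Derive_n (Derive f) m x = Derive_n f (S m) x.
Proof.
  revert x; induction m; intro x; simpl. reflexivity.
  apply Derive_ext. intro; apply IHm.
Qed.

Lemma smk_mono k U f : smk (S k) U f -> smk k U f.
Proof. intros H m x Hm Hx; apply H; auto. Qed.

Lemma smk_le k k' U f : (k' <= k)%nat -> smk k U f -> smk k' U f.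
Proof. intros Hk H m x Hm Hx; apply H; [lia|auto]. Qed.

Lemma smk_S k U f : smk 0 U f -> smk k U (Derive f) -> smk (S k) U f.
Proof.
  intros H0 H m x Hm Hx. destruct m. now apply (H0 0%nat).
  apply ex_derive_ext with (f := Derive_n (Derive f) m).
  intro; apply Derive_n_S_fun. apply H; auto; lia.
Qed.

Lemma smk_D k U f : smk (S k) U f -> smk k U (Derive f).
Proof.
  intros H m x Hm Hx.
  apply ex_derive_ext with (f := Derive_n f (S m)).
  intro; symmetry; apply Derive_n_S_fun. apply H; auto; lia.
Qed.

Lemma smk_0 k U f x : smk k U f -> U x -> ex_derive f x.
Proof. intros H Hx. apply (H 0%nat x); auto; lia. Qed.

Lemma exn_of_smk k U f x : smk k U f -> U x -> forall j, (j <= S k)%nat -> ex_derive_n f j x.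
Proof. intros H Hx j Hj. destruct j; simpl; auto. apply H; auto; lia. Qed.

Lemma loc_exn k U f x : open U -> smk k U f -> U x ->
  locally x (fun y => forall j, (j <= k)%nat -> ex_derive_n f j y).
Proof.
  intros HU H Hx. apply (locally_open U); auto.
  intros y Hy j Hj. apply (exn_of_smk k U f y H Hy); lia.
Qed.

Lemma smk_ext k U f g : open U -> (forall x, U x -> f x = g x) -> smk k U f -> smk k U g.
Proof.
  intros HU He H m x Hm Hx.
  apply ex_derive_ext_loc with (f := Derive_n f m); [|apply H; auto].
  apply (locally_open U); auto. intros y Hy.
  apply Derive_n_ext_loc. apply (locally_open U); auto.
Qed.

Lemma smk_plus k U f g : open U -> smk k U f -> smk k U g -> smk k U (fun x => f x + g x).
Proof.
  intros HU Hf Hg m x Hm Hx.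
  apply ex_derive_ext_loc with (f := fun y => Derive_n f m y + Derive_n g m y).
  - apply (locally_open U); auto. intros y Hy. symmetry. apply Derive_n_plus.
    + eapply filter_imp; [|apply (loc_exn k U f y HU Hf Hy)]. intros z Hz j Hj; apply Hz; lia.
    + eapply filter_imp; [|apply (loc_exn k U g y HU Hg Hy)]. intros z Hz j Hj; apply Hz; lia.
  - apply (ex_derive_plus (fun y => Derive_n f m y) (fun y => Derive_n g m y)); auto.
Qed.

Lemma smk_scal k U c f : smk k U f -> smk k U (fun x => c * f x).
Proof.
  intros Hf m x Hm Hx.
  apply ex_derive_ext with (f := fun y => c * Derive_n f m y).
  intro; symmetry; apply Derive_n_scal_l. apply ex_derive_scal; auto.
Qed.

Lemma Derive_n_const_S c m t : Derive_n (fun _ => c) (S m) t = 0.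
Proof.
  revert t; induction m; intro t; simpl. apply Derive_const.
  rewrite (Derive_ext _ (fun _ => 0)). apply Derive_const. intro; apply IHm.
Qed.

Lemma smk_const k U c : smk k U (fun _ => c).
Proof.
  intros m x Hm Hx. destruct m. apply ex_derive_const.
  apply ex_derive_ext with (f := fun _ => 0).
  intro t. symmetry. apply Derive_n_const_S. apply ex_derive_const.
Qed.

Lemma smk_id k U : smk k U (fun x => x).
Proof.
  destruct k. intros m x Hm Hx. replace m with 0%nat by lia. apply ex_derive_id.
  apply smk_S. intros m x Hm Hx. replace m with 0%nat by lia. apply ex_derive_id.
  replace (Derive (fun x => x)) with (fun _ : R => 1). apply smk_const.
  apply functional_extensionality. intro; symmetry; apply Derive_id.
Qed.

Lemma smk0_intro U f : (forall x, U x -> ex_derive f x) -> smk 0 U f.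
Proof. intros H m x Hm Hx. replace m with 0%nat by lia. apply H; auto. Qed.

Lemma smk_mult k U f g : open U -> smk k U f -> smk k U g -> smk k U (fun x => f x * g x).
Proof.
  intro HU. revert f g; induction k; intros f g Hf Hg.
  - apply smk0_intro. intros x Hx. apply ex_derive_mult; eapply smk_0; eauto.
  - apply smk_S. apply smk0_intro. intros x Hx. apply ex_derive_mult; eapply smk_0; eauto.
    apply smk_ext with (f := fun x => Derive f x * g x + f x * Derive g x); auto.
    intros x Hx. symmetry; apply Derive_mult; eapply smk_0; eauto.
    apply smk_plus; auto; apply IHk; auto using smk_D, smk_mono.
Qed.

Lemma smk_inv k U f : open U -> (forall x, U x -> f x <> 0) -> smk k U f -> smk k U (fun x => / f x).
Proof.
  intros HU Hnz. revert f Hnz; induction k; intros f Hnz Hf.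
  - apply smk0_intro. intros x Hx. apply ex_derive_inv; auto; eapply smk_0; eauto.
  - apply smk_S. apply smk0_intro. intros x Hx. apply ex_derive_inv; auto; eapply smk_0; eauto.
    apply smk_ext with (f := fun x => (-1) * (Derive f x * (/ f x * / f x))); auto.
    intros x Hx. rewrite Derive_inv; auto. field; auto. eapply smk_0; eauto.
    apply smk_scal. apply smk_mult; auto. apply smk_D; auto.
    apply smk_mult; auto; apply IHk; auto; apply smk_mono; auto.
Qed.

Lemma smk_comp k U V G u : open U -> open V -> (forall x, U x -> V (u x)) ->
  smk k V G -> smk k U u -> smk k U (fun x => G (u x)).
Proof.
  intros HU HV Hm. revert G; induction k; intros G HG Hu.
  - apply smk0_intro. intros x Hx. apply ex_derive_comp; eapply smk_0; eauto.
  - apply smk_S. apply smk0_intro. intros x Hx. apply ex_derive_comp; eapply smk_0; eauto.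
    apply smk_ext with (f := fun x => Derive u x * Derive G (u x)); auto.
    intros x Hx. symmetry; apply Derive_comp; eapply smk_0; eauto.
    apply smk_mult; auto. apply smk_D; auto. apply IHk; auto using smk_D, smk_mono.
Qed.

Definition sm U f := forall k, smk k U f.

Lemma smk_of_exn U f : (forall n x, U x -> ex_derive_n f n x) -> sm U f.
Proof. intros H k m x Hm Hx. apply (H (S m) x Hx). Qed.

Lemma CV_radius_from_conv (c : nat -> R) (r : R) (g : R -> R) :
  (forall x, Rabs x < r -> is_pseries c x (g x)) ->
  forall x, Rabs x < r -> Rbar_lt (Rabs x) (CV_radius c).
Proof.
  intros H x Hx.
  set (y := (Rabs x + r) / 2).
  assert (Hy : Rabs y < r). { unfold y. pose proof (Rabs_pos x). rewrite Rabs_right; lra. }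
  destruct (Rbar_lt_le_dec (CV_radius c) (Rabs y)) as [Hl|Hl].
  - exfalso. apply (CV_disk_outside c y Hl).
    pose proof (ex_series_lim_0 _ (ex_intro _ _ (H y Hy))) as Hz.
    eapply is_lim_seq_ext; [|exact Hz]. intro n. simpl. unfold scal; simpl.
    unfold mult; simpl. rewrite pow_n_pow. ring.
  - eapply Rbar_lt_le_trans; [|exact Hl]. simpl. unfold y.
    pose proof (Rabs_pos x). rewrite (Rabs_right ((Rabs x + r)/2)); lra.
Qed.

Lemma sm_PSeries_inf (a : nat -> R) U : CV_radius a = p_infty -> sm U (PSeries a).
Proof.
  intros H k m x Hm Hx. apply (ex_derive_n_PSeries (S m)). rewrite H; simpl; auto.
Qed.

Lemma sm_PSeries (a : nat -> R) r : (forall x, Rabs x < r -> Rbar_lt (Rabs x) (CV_radius a)) ->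
  sm (fun x => Rabs x < r) (PSeries a).
Proof.
  intros H k m x Hm Hx. apply (ex_derive_n_PSeries (S m)). auto.
Qed.

Lemma sin_radius : CV_radius sin_n = p_infty.
Proof.
  apply CV_radius_infinite_DAlembert. apply sin_no_R0.
  apply is_lim_seq_Reals. apply Alembert_sin.
Qed.

Lemma cos_no_R0 n : cos_n n <> 0.
Proof.
  unfold cos_n. apply Rmult_integral_contrapositive_currified.
  apply pow_nonzero; lra. apply Rinv_neq_0_compat. apply not_0_INR.
  apply Factorial.fact_neq_0.
Qed.

Lemma cos_radius : CV_radius cos_n = p_infty.
Proof.
  apply CV_radius_infinite_DAlembert. apply cos_no_R0.
  apply is_lim_seq_Reals. apply Alembert_cos.
Qed.

Lemma sin_PS t : sin t = t * PSeries sin_n (t * t).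
Proof.
  unfold sin. destruct (exist_sin (Rsqr t)) as [l Hl]. f_equal.
  symmetry. apply is_pseries_unique. apply is_pseries_Reals. exact Hl.
Qed.

Lemma cos_PS t : cos t = PSeries cos_n (t * t).
Proof.
  unfold cos. destruct (exist_cos (Rsqr t)) as [l Hl].
  symmetry. apply is_pseries_unique. apply is_pseries_Reals. exact Hl.
Qed.

Lemma exd_cont (f : R -> R) x : ex_derive f x -> continuous f x.
Proof. apply (@ex_derive_continuous R_AbsRing R_NormedModule). Qed.
Lemma RInt_uniq (f : R -> R) a b l : is_RInt f a b l -> RInt f a b = l.
Proof. apply (@is_RInt_unique R_CompleteNormedModule). Qed.
Lemma RInt_der (f df : R -> R) a b : (forall x, Rmin a b <= x <= Rmax a b -> is_derive f x (df x)) ->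
  (forall x, Rmin a b <= x <= Rmax a b -> continuous df x) -> RInt df a b = f b - f a.
Proof. intros H1 H2. apply RInt_uniq. apply (@is_RInt_derive R_CompleteNormedModule f df a b); auto. Qed.

Lemma exd_plus (f g : R -> R) x : ex_derive f x -> ex_derive g x -> ex_derive (fun y => f y + g y) x.
Proof. apply (@ex_derive_plus R_AbsRing R_NormedModule). Qed.
Lemma exd_minus (f g : R -> R) x : ex_derive f x -> ex_derive g x -> ex_derive (fun y => f y - g y) x.
Proof. apply (@ex_derive_minus R_AbsRing R_NormedModule). Qed.

Ltac Req := match goal with |- @eq _ ?a ?b => change (@eq R a b) end.

Fixpoint pk (k : nat) (t : R) : R :=
  match k with
  | O => t - 1/2
  | S k => RInt (pk k) 0 t - RInt (fun s => RInt (pk k) 0 s) 0 1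
  end.

Lemma ex_RInt_cont_all (f : R -> R) a b : (forall x, continuous f x) -> ex_RInt f a b.
Proof. intros H. apply (@ex_RInt_continuous R_CompleteNormedModule). intros; apply H. Qed.

Lemma is_derive_RInt_all (f : R -> R) t : (forall x, continuous f x) ->
  is_derive (fun t => RInt f 0 t) t (f t).
Proof.
  intros H. apply is_derive_RInt with (a := 0).
  apply filter_forall. intro b. apply RInt_correct. apply ex_RInt_cont_all; auto.
  apply H.
Qed.

Lemma pk_props k : (forall t, continuous (pk k) t) /\ (forall t, is_derive (pk (S k)) t (pk k t))
   /\ RInt (pk k) 0 1 = 0.
Proof.
  induction k.
  - assert (Hc : forall t, continuous (pk 0) t).
    { intro t. simpl. apply (exd_cont (fun t => t - 1/2)). auto_derive; auto. }
    split; [exact Hc|split].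
    + intro t. simpl. pose proof (is_derive_RInt_all (pk 0) t Hc) as H.
      apply is_derive_ext with (f := fun t => RInt (pk 0) 0 t - RInt (fun s => RInt (pk 0) 0 s) 0 1).
      intro; reflexivity.
      replace (t - 1/2) with (pk 0 t - 0) by (simpl; ring).
      apply (is_derive_minus (fun t => RInt (pk 0) 0 t) (fun _ => RInt (fun s => RInt (pk 0) 0 s) 0 1)).
      exact H. apply (@is_derive_const R_AbsRing R_NormedModule).
    + assert (H : is_RInt (pk 0) 0 1 (minus ((fun t => t*t/2 - t/2) 1) ((fun t => t*t/2 - t/2) 0))).
      { apply (@is_RInt_derive R_CompleteNormedModule (fun t => t*t/2 - t/2) (pk 0) 0 1). intros x _. simpl. auto_derive; auto. field.
        intros x _. apply Hc. }
      apply (@is_RInt_unique R_CompleteNormedModule) in H. rewrite H. unfold minus, plus, opp; simpl. field.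
  - destruct IHk as [Hc [Hd Hi]].
    assert (Hc' : forall t, continuous (pk (S k)) t).
    { intro t. eapply exd_cont. eexists. apply Hd. }
    split; [exact Hc'|split].
    + intro t. pose proof (is_derive_RInt_all (pk (S k)) t Hc') as H.
      replace (pk (S k) t) with (pk (S k) t - 0) by ring.
      apply (is_derive_minus (fun t => RInt (pk (S k)) 0 t) (fun _ => RInt (fun s => RInt (pk (S k)) 0 s) 0 1)).
      exact H. apply (@is_derive_const R_AbsRing R_NormedModule).
    + change (pk (S k)) with (fun t => RInt (pk k) 0 t - RInt (fun s => RInt (pk k) 0 s) 0 1).
      rewrite (RInt_minus (fun t => RInt (pk k) 0 t) (fun _ => RInt (fun s => RInt (pk k) 0 s) 0 1)).
      rewrite RInt_const. unfold minus, plus, opp, scal; simpl. unfold mult; simpl. ring.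
      apply ex_RInt_cont_all. intro x. eapply exd_cont. eexists.
      apply is_derive_RInt_all; auto.
      apply ex_RInt_const.
Qed.

Lemma pk_periodic k : pk (S k) 1 = pk (S k) 0.
Proof.
  simpl. destruct (pk_props k) as [_ [_ Hi]]. rewrite Hi, RInt_point. reflexivity.
Qed.

Lemma RInt_plusR (f g : R -> R) a b : ex_RInt f a b -> ex_RInt g a b ->
  RInt (fun x => f x + g x) a b = RInt f a b + RInt g a b.
Proof. intros. apply (@RInt_plus R_CompleteNormedModule); auto. Qed.
Lemma RInt_minusR (f g : R -> R) a b : ex_RInt f a b -> ex_RInt g a b ->
  RInt (fun x => f x - g x) a b = RInt f a b - RInt g a b.
Proof. intros. apply (@RInt_minus R_CompleteNormedModule); auto. Qed.
Lemma RInt_scalR (f : R -> R) a b c : ex_RInt f a b ->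
  RInt (fun x => c * f x) a b = c * RInt f a b.
Proof. intros. apply (@RInt_scal R_CompleteNormedModule); auto. Qed.
Lemma ex_RInt_der (f : R -> R) a b : (forall x, ex_derive f x) -> ex_RInt f a b.
Proof. intros H. apply ex_RInt_cont_all. intro; apply exd_cont; auto. Qed.

Lemma pk_exd k t : ex_derive (pk k) t.
Proof.
  destruct k. simpl. auto_derive; auto. eexists. apply (pk_props k).
Qed.

Lemma ibp (q dq G dG : R -> R) u h :
 0 < h -> (forall t, is_derive q t (dq t)) -> (forall t, ex_derive dq t) ->
 (forall x, is_derive G x (dG x)) -> (forall x, ex_derive dG x) ->
 RInt (fun x => dq ((x-u)/h) * G x) u (u+h) =
   h * (q 1 * G (u+h) - q 0 * G u) - h * RInt (fun x => q ((x-u)/h) * dG x) u (u+h).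
Proof.
  intros Hh Hq Hdq HG HdG.
  assert (Hs : forall x, is_derive (fun x => (x - u)/h) x (/h)).
  { intro x. auto_derive; auto. field; lra. }
  assert (Hqc : forall x, is_derive (fun x => q ((x-u)/h)) x (/h * dq ((x-u)/h))).
  { intro x. apply (is_derive_comp q (fun x => (x-u)/h)). apply Hq. apply Hs. }
  assert (Hd : forall x, ex_derive (fun x => dq ((x-u)/h)) x).
  { intro x. apply ex_derive_comp. apply Hdq. eexists; apply Hs. }
  assert (Hqd : forall x, ex_derive (fun x => q ((x-u)/h)) x).
  { intro x. eexists; apply Hqc. }
  assert (HGd : forall x, ex_derive G x). { intro x; eexists; apply HG. }
  assert (E : RInt (fun x => dq ((x-u)/h) * G x + h * (q ((x-u)/h) * dG x)) u (u+h)
            = (fun x => h * q ((x-u)/h) * G x) (u+h) - (fun x => h * q ((x-u)/h) * G x) u).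
  { apply (RInt_der (fun x => h * q ((x-u)/h) * G x)).
    - intros x _. 
      apply is_derive_ext with (f := fun x => h * (q ((x-u)/h) * G x)). intro; symmetry; apply Rmult_assoc.
      replace (dq ((x - u) / h) * G x + h * (q ((x - u) / h) * dG x))
        with (h * ((/h * dq ((x-u)/h)) * G x + q ((x-u)/h) * dG x)) by (field; lra).
      apply is_derive_scal. apply (is_derive_mult (fun x => q ((x-u)/h)) G). apply Hqc. apply HG.
      intros; apply Rmult_comm.
    - intros x _. apply exd_cont. apply exd_plus. apply ex_derive_mult. apply Hd. apply HGd.
      apply ex_derive_scal. apply ex_derive_mult. apply Hqd. apply HdG. }
  rewrite RInt_plusR in E. rewrite RInt_scalR in E.
  replace ((u + h - u) / h) with 1 in E by (field; apply Rgt_not_eq; exact Hh).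
  replace ((u - u) / h) with 0 in E by (field; apply Rgt_not_eq; exact Hh).
  - revert E. generalize (RInt (fun x : R => dq ((x - u) / h) * G x) u (u + h)) as A.
    generalize (RInt (fun x : R => q ((x - u) / h) * dG x) u (u + h)) as B.
    intros B A E. change R in A, B.
    assert (H : @eq R A (h * q 1 * G (u + h) - h * q 0 * G u - h * B)).
    { rewrite <- E. change (@eq R A (A + h * B - h * B)). ring. }
    change (@eq R A (h * (q 1 * G (u + h) - q 0 * G u) - h * B)).
    rewrite H. ring.
  - apply ex_RInt_der; intro x. apply ex_derive_mult. apply Hqd. apply HdG.
  - apply ex_RInt_der; intro x. apply ex_derive_mult. apply Hd. apply HGd.
  - apply ex_RInt_der; intro x. apply ex_derive_scal. apply ex_derive_mult. apply Hqd. apply HdG.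
Qed.

Fixpoint sumN (f : nat -> R) (N : nat) : R :=
  match N with O => 0 | S n => sumN f n + f n end.

Lemma sumN_ext f g N : (forall j, (j < N)%nat -> f j = g j) -> sumN f N = sumN g N.
Proof. induction N; intros H; simpl; auto. rewrite IHN, H; auto. Qed.

Lemma sumN_plus f g N : sumN (fun j => f j + g j) N = sumN f N + sumN g N.
Proof. induction N; simpl; auto. ring. rewrite IHN; ring. Qed.

Lemma sumN_minus f g N : sumN (fun j => f j - g j) N = sumN f N - sumN g N.
Proof. induction N; simpl; auto. ring. rewrite IHN; ring. Qed.

Lemma sumN_scal c f N : sumN (fun j => c * f j) N = c * sumN f N.
Proof. induction N; simpl; auto. ring. rewrite IHN; ring. Qed.

Lemma sumN_tele g N : sumN (fun j => g (S j) - g j) N = g N - g O.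
Proof. induction N; simpl. ring. rewrite IHN; ring. Qed.

Lemma sumN_abs_le f b N : (forall j, (j < N)%nat -> Rabs (f j) <= b) -> Rabs (sumN f N) <= INR N * b.
Proof.
  induction N; intros H; cbn [sumN]. rewrite Rabs_R0; simpl; lra.
  rewrite S_INR. eapply Rle_trans. apply Rabs_triang.
  assert (Rabs (sumN f N) <= INR N * b) by (apply IHN; intros; apply H; lia).
  assert (Rabs (f N) <= b) by (apply H; lia). lra.
Qed.

Lemma cont_bound (f : R -> R) a b : a <= b -> (forall x, continuous f x) ->
  exists M, forall x, a <= x <= b -> Rabs (f x) <= M.
Proof.
  intros Hab Hc.
  destruct (continuity_ab_maj (fun x => Rabs (f x)) a b Hab) as [Mx [HM _]].
  intros c _. apply continuity_pt_comp with (f1 := f) (f2 := Rabs).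
  apply continuity_pt_filterlim. apply Hc. apply Rcontinuity_abs.
  exists (Rabs (f Mx)). exact HM.
Qed.

Lemma Derive_n_periodic F P k x : (forall x, F (x + P) = F x) -> Derive_n F k (x + P) = Derive_n F k x.
Proof.
  intros HP. rewrite <- Derive_n_comp_trans.
  apply Derive_n_ext. intro; apply HP.
Qed.

Lemma chasles_sum (F : R -> R) (xj : nat -> R) N : (forall x, continuous F x) ->
  sumN (fun j => RInt F (xj j) (xj (S j))) N = RInt F (xj O) (xj N).
Proof.
  intros Hc. induction N; simpl. rewrite RInt_point; reflexivity.
  rewrite IHN. apply (@RInt_Chasles R_CompleteNormedModule); apply ex_RInt_cont_all; auto.
Qed.

Section Super.
Variables (F : R -> R) (P x0 : R).
Hypothesis HPpos : 0 < P.
Hypothesis HPer : forall x, F (x + P) = F x.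
Hypothesis HSm : forall k x, ex_derive (Derive_n F k) x.

Lemma F_der k x : is_derive (Derive_n F k) x (Derive_n F (S k) x).
Proof. apply Derive_correct. apply HSm. Qed.

Variable N : nat.
Hypothesis HN : (0 < N)%nat.
Let h := P / INR N.
Let xj (j : nat) := x0 + INR j * h.

Lemma h_pos : 0 < h.
Proof. unfold h. apply Rdiv_lt_0_compat; auto. apply lt_0_INR; auto. Qed.

Lemma xj_S j : xj (S j) = xj j + h.
Proof. unfold xj. rewrite S_INR. ring. Qed.

Lemma xj_N : xj N = x0 + P.
Proof. unfold xj, h. field. apply not_0_INR. lia. Qed.

Definition Dk k := sumN (fun j => RInt (fun x => pk k ((x - xj j)/h) * Derive_n F (S k) x) (xj j) (xj j + h)) N.

Lemma claimA : h * sumN (fun j => F (xj j)) N - RInt F x0 (x0 + P) = h * Dk 0.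
Proof.
  assert (Hcell : forall j, h * RInt (fun x => pk 0 ((x - xj j)/h) * Derive_n F 1 x) (xj j) (xj j + h)
     = h * (F (xj (S j)) + F (xj j)) / 2 - RInt F (xj j) (xj (S j))).
  { intro j. pose proof (ibp (pk 0) (fun _ => 1) F (Derive_n F 1) (xj j) h h_pos) as H.
    rewrite xj_S.
    rewrite <- (RInt_ext (fun x => 1 * F x) F) by (intros; apply Rmult_1_l).
    rewrite H. simpl. field.
    - intro t. simpl. auto_derive; try ring; auto.
    - intro; apply ex_derive_const.
    - intro x. apply (F_der 0).
    - intro x. apply HSm. }
  replace (h * Dk 0) with (sumN (fun j => h * RInt (fun x => pk 0 ((x - xj j)/h) * Derive_n F 1 x) (xj j) (xj j + h)) N)
    by (unfold Dk; rewrite sumN_scal; reflexivity).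
  rewrite (sumN_ext _ _ N (fun j _ => Hcell j)).
  rewrite sumN_minus. rewrite chasles_sum. rewrite xj_N. replace (xj O) with x0 by (unfold xj; simpl; ring).
  2: intro; apply exd_cont; apply (HSm 0).
  assert (sumN (fun j => h * (F (xj (S j)) + F (xj j)) / 2) N = h * sumN (fun j => F (xj j)) N).
  { rewrite <- sumN_scal.
    replace (sumN (fun j => h * (F (xj (S j)) + F (xj j)) / 2) N)
      with (sumN (fun j => h / 2 * (F (xj (S j)) - F (xj j)) + h * F (xj j)) N).
    rewrite sumN_plus, sumN_scal, (sumN_tele (fun j => F (xj j))).
    rewrite xj_N. replace (xj O) with x0 by (unfold xj; simpl; ring). rewrite HPer. ring.
    apply sumN_ext. intros; field. }
  rewrite H. ring.
Qed.

Lemma claimB k : Dk k = - h * Dk (S k).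
Proof.
  assert (Hcell : forall j, RInt (fun x => pk k ((x - xj j)/h) * Derive_n F (S k) x) (xj j) (xj j + h)
     = h * pk (S k) 0 * (Derive_n F (S k) (xj (S j)) - Derive_n F (S k) (xj j))
       - h * RInt (fun x => pk (S k) ((x - xj j)/h) * Derive_n F (S (S k)) x) (xj j) (xj j + h)).
  { intro j. rewrite (ibp (pk (S k)) (pk k) (Derive_n F (S k)) (Derive_n F (S (S k))) (xj j) h h_pos).
    rewrite pk_periodic, xj_S. Req; ring.
    - intro t. apply pk_props.
    - intro t. apply pk_exd.
    - intro x. apply F_der.
    - intro x. apply HSm. }
  unfold Dk at 1. rewrite (sumN_ext _ _ N (fun j _ => Hcell j)).
  rewrite sumN_minus, !sumN_scal.
  rewrite (sumN_tele (fun j => Derive_n F (S k) (xj j))).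
  rewrite xj_N. replace (xj O) with x0 by (unfold xj; simpl; ring).
  rewrite Derive_n_periodic by exact HPer. unfold Dk. ring.
Qed.

Lemma claimAB k : h * sumN (fun j => F (xj j)) N - RInt F x0 (x0 + P) = h * (- h) ^ k * Dk k.
Proof.
  rewrite claimA. induction k. simpl; ring.
  rewrite IHk, claimB. simpl. ring.
Qed.

Lemma Dk_bound k B M : (forall t, 0 <= t <= 1 -> Rabs (pk k t) <= B) ->
  (forall x, x0 <= x <= x0 + P -> Rabs (Derive_n F (S k) x) <= M) ->
  Rabs (Dk k) <= P * (B * M).
Proof.
  intros HB HM. unfold Dk.
  replace (P * (B * M)) with (INR N * (h * (B * M))).
  2: unfold h; field; apply not_0_INR; lia.
  apply sumN_abs_le. intros j Hj.
  pose proof h_pos as Hh.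
  assert (Hx0 : x0 <= xj j) by (unfold xj; pose proof (pos_INR j); nra).
  assert (Hx1 : xj j + h <= x0 + P).
  { rewrite <- xj_S, <- xj_N. unfold xj. apply Rplus_le_compat_l. apply Rmult_le_compat_r; [lra|].
    apply le_INR; lia. }
  replace (h * (B * M)) with ((xj j + h - xj j) * (B * M)) by ring.
  apply abs_RInt_le_const. lra.
  apply ex_RInt_der. intro x. apply ex_derive_mult. apply ex_derive_comp. apply pk_exd.
  auto_derive; auto. apply HSm.
  intros t Ht. rewrite Rabs_mult. apply Rmult_le_compat; try apply Rabs_pos.
  apply HB. split. apply Rdiv_le_0_compat; lra.
  apply (Rmult_le_reg_r h); auto. unfold Rdiv; rewrite Rmult_assoc, Rinv_l; lra.
  apply HM. lra.
Qed.
End Super.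

Theorem trap_superconv (F : R -> R) (P x0 : R) (k : nat) :
  0 < P -> (forall x, F (x + P) = F x) -> (forall k x, ex_derive (Derive_n F k) x) ->
  exists C, forall N, (0 < N)%nat ->
    Rabs (P / INR N * sumN (fun j => F (x0 + INR j * (P / INR N))) N - RInt F x0 (x0 + P))
      <= C * (P / INR N) ^ (S k).
Proof.
  intros HP HPer HSm.
  destruct (cont_bound (pk k) 0 1) as [B HB]. lra. intro; apply exd_cont; apply pk_exd.
  destruct (cont_bound (Derive_n F (S k)) x0 (x0 + P)) as [M HM]. lra. intro; apply exd_cont; apply HSm.
  exists (P * (B * M)). intros N HN.
  rewrite (claimAB F P x0 HP HPer HSm N HN k).
  set (h := P / INR N).
  assert (Hh : 0 < h) by (apply (h_pos P HP N HN)).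
  rewrite !Rabs_mult. rewrite <- RPow_abs. rewrite Rabs_Ropp. rewrite (Rabs_right h) by lra.
  replace (P * (B * M) * h ^ S k) with (h * h ^ k * (P * (B * M))) by (simpl; ring).
  apply Rmult_le_compat_l. apply Rmult_le_pos. lra. apply pow_le; lra.
  apply Dk_bound; auto.
Qed.

Lemma sumN_const c N : sumN (fun _ => c) N = INR N * c.
Proof. induction N; simpl sumN. simpl; ring. rewrite IHN, S_INR; ring. Qed.

Lemma sumN_zero f N : (forall j, (j < N)%nat -> f j = 0) -> sumN f N = 0.
Proof. intros H. rewrite (sumN_ext _ (fun _ => 0)); auto. rewrite sumN_const; ring. Qed.

Lemma sumN_swap (f : nat -> nat -> R) A B :
  sumN (fun l => sumN (fun j => f l j) A) B = sumN (fun j => sumN (fun l => f l j) B) A.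
Proof.
  induction B; simpl. symmetry; apply sumN_zero; auto.
  rewrite IHB. rewrite <- sumN_plus. reflexivity.
Qed.

Definition Dir (j : nat) (t : R) := 1 + 2 * sumN (fun k => cos (INR (S k) * t)) j.

Lemma Dir_sin j t : Dir j t * sin (t/2) = sin ((INR j + /2) * t).
Proof.
  induction j; unfold Dir in *; cbn [sumN].
  - change (INR 0) with 0. replace ((0 + /2) * t) with (t/2) by field. ring.
  - replace ((1 + 2 * (sumN (fun k => cos (INR (S k) * t)) j + cos (INR (S j) * t))) * sin (t / 2))
      with ((1 + 2 * sumN (fun k => cos (INR (S k) * t)) j) * sin (t / 2) + 2 * cos (INR (S j) * t) * sin (t/2)) by ring.
    rewrite IHj.
    replace ((INR (S j) + / 2) * t) with (INR (S j) * t + t/2) by (rewrite S_INR; field).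
    replace ((INR j + / 2) * t) with (INR (S j) * t - t/2) by (rewrite S_INR; field).
    rewrite sin_plus, sin_minus. ring.
Qed.

Lemma Dir_sum n t : sumN (fun j => Dir j t) n * (sin (t/2))^2 = (sin (INR n * t / 2))^2.
Proof.
  assert (H : forall j, Dir j t * (sin (t/2))^2 = (cos (INR j * t) - cos (INR (S j) * t)) / 2).
  { intro j. replace (Dir j t * (sin (t/2))^2) with ((Dir j t * sin (t/2)) * sin (t/2)) by ring.
    rewrite Dir_sin.
    replace (INR j * t) with ((INR j + /2) * t - t/2) by field.
    replace (INR (S j) * t) with ((INR j + /2) * t + t/2) by (rewrite S_INR; field).
    rewrite cos_minus, cos_plus. field. }
  rewrite Rmult_comm, <- sumN_scal.
  rewrite (sumN_ext _ (fun j => (-/2) * (cos (INR (S j) * t) - cos (INR j * t)))).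
  rewrite sumN_scal, (sumN_tele (fun j => cos (INR j * t))).
  assert (Hc : cos (INR n * t) = 1 - 2 * sin (INR n * t / 2) ^ 2).
  { replace (INR n * t) with (2 * (INR n * t / 2)) at 1 by field. rewrite cos_2a_sin. ring. }
  rewrite Hc. change (INR 0) with 0. rewrite Rmult_0_l, cos_0. field.
  intros j _. rewrite (Rmult_comm (sin (t/2) ^ 2)), H. field.
Qed.

Lemma cos_sum_zero n m : (1 <= m < n)%nat ->
  sumN (fun l => cos (INR m * (PI * (2 * INR l + 1) / INR n))) n = 0.
Proof.
  intros Hm.
  set (th := INR m * PI / INR n).
  assert (Hn : 0 < INR n) by (apply lt_0_INR; lia).
  assert (Hth : 0 < sin th).
  { apply sin_gt_0; unfold th.
    - apply Rdiv_lt_0_compat; auto. apply Rmult_lt_0_compat. apply lt_0_INR; lia. apply PI_RGT_0.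
    - apply (Rmult_lt_reg_r (INR n)); auto. unfold Rdiv. rewrite Rmult_assoc, Rinv_l by lra.
      rewrite Rmult_1_r, Rmult_comm. apply Rmult_lt_compat_l. apply PI_RGT_0. apply lt_INR; lia. }
  apply (Rmult_eq_reg_l (2 * sin th)); [|lra].
  rewrite Rmult_0_r, <- sumN_scal.
  rewrite (sumN_ext _ (fun l => sin (INR (S l) * (2 * th)) - sin (INR l * (2 * th)))).
  rewrite (sumN_tele (fun l => sin (INR l * (2 * th)))).
  replace (INR n * (2 * th)) with (IZR (2 * Z.of_nat m) * PI).
  rewrite sin_eq_0_1. simpl. rewrite Rmult_0_l, sin_0. ring.
  eexists; reflexivity.
  unfold th. rewrite mult_IZR, <- INR_IZR_INZ. simpl. field. lra.
  intros l _.
  replace (INR m * (PI * (2 * INR l + 1) / INR n)) with (INR (S l) * (2*th) - th)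
    by (unfold th; rewrite S_INR; field; lra).
  replace (INR l * (2 * th)) with (INR (S l) * (2*th) - 2 * th) by (rewrite S_INR; ring).
  rewrite cos_minus, !sin_minus. rewrite sin_2a, cos_2a_sin. ring_simplify.
  replace (cos th ^ 2) with (1 - sin th ^ 2). ring.
  pose proof (sin2 th). unfold Rsqr in H. simpl. lra.
Qed.

Lemma odd_sum n : (0 < n)%nat ->
  sumN (fun l => / (sin (PI * (2 * INR l + 1) / (2 * INR n)))^2) n = INR n ^ 2.
Proof.
  intros Hn0.
  assert (Hn : 0 < INR n) by (apply lt_0_INR; lia).
  set (t := fun l => PI * (2 * INR l + 1) / INR n).
  rewrite (sumN_ext _ (fun l => sumN (fun j => Dir j (t l)) n)).
  - unfold Dir. rewrite sumN_swap.
    rewrite (sumN_ext _ (fun j => INR n * 1 + 2 * 0)).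
    rewrite sumN_const. simpl. ring.
    intros j Hj. rewrite sumN_plus, sumN_const, sumN_scal. f_equal. f_equal.
    rewrite sumN_swap. apply sumN_zero. intros k Hk.
    unfold t. apply cos_sum_zero. lia.
  - intros l Hl.
    assert (Hs : 0 < sin (t l / 2)).
    { apply sin_gt_0; unfold t.
      - apply Rdiv_lt_0_compat; [|lra]. apply Rdiv_lt_0_compat; auto.
        apply Rmult_lt_0_compat. apply PI_RGT_0. pose proof (pos_INR l); lra.
      - apply (Rmult_lt_reg_r (2 * INR n)). lra.
        replace (PI * (2 * INR l + 1) / INR n / 2 * (2 * INR n)) with (PI * (2 * INR l + 1)) by (field; lra).
        apply Rmult_lt_compat_l. apply PI_RGT_0. assert (Hl2 : INR (S l) <= INR n) by (apply le_INR; lia). rewrite S_INR in Hl2. lra. }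
    pose proof (Dir_sum n (t l)) as H.
    assert (H1 : (sin (INR n * t l / 2))^2 = 1).
    { replace (INR n * t l / 2) with (PI / 2 + INR l * PI) by (unfold t; field; lra).
      pose proof (sin2 (PI / 2 + INR l * PI)). unfold Rsqr in H0. simpl.
      rewrite cos_plus, cos_PI2, sin_PI2 in H0.
      rewrite (sin_eq_0_1 (INR l * PI)) in H0. lra.
      exists (Z.of_nat l). rewrite <- INR_IZR_INZ. reflexivity. }
    rewrite H1 in H.
    replace (PI * (2 * INR l + 1) / (2 * INR n)) with (t l / 2) by (unfold t; field; lra).
    apply (Rmult_eq_reg_r ((sin (t l / 2))^2)). rewrite H. field. lra.
    apply pow_nonzero; lra.
Qed.

Definition cs2 x := / (sin x)^2.

Lemma sumN_shift f N : sumN f (S N) = f O + sumN (fun j => f (S j)) N.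
Proof. induction N; cbn [sumN]. ring. cbn [sumN] in IHN. rewrite IHN. ring. Qed.

Lemma sumN_split f A B : sumN f (A + B) = sumN f A + sumN (fun j => f (A + j)%nat) B.
Proof. induction B. rewrite Nat.add_0_r; simpl; ring. rewrite Nat.add_succ_r; cbn [sumN]. rewrite IHB; ring. Qed.

Lemma sumN_evenodd f N : sumN f (2 * N) = sumN (fun j => f (2 * j)%nat) N + sumN (fun j => f (S (2 * j))) N.
Proof.
  induction N. simpl; ring.
  replace (2 * S N)%nat with (S (S (2 * N))) by lia. cbn [sumN]. rewrite IHN. ring.
Qed.

Lemma sumN_rev f N : sumN f N = sumN (fun j => f (N - S j)%nat) N.
Proof.
  revert f; induction N; intro f. reflexivity.
  rewrite sumN_shift. cbn [sumN].
  rewrite (IHN (fun j => f (S j))). replace (S N - S N)%nat with O by lia.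
  rewrite (sumN_ext (fun j => f (S N - S j)%nat) (fun j => f (S (N - S j)))). ring.
  intros; f_equal; lia.
Qed.

Section Q.
Variable n : nat.
Hypothesis Hn : (0 < n)%nat.

Definition Qs := sumN (fun k => cs2 (PI * INR k / (2 * INR n))) n.
Definition Secs := sumN (fun k => / (cos (PI * INR k / (2 * INR n)))^2) n.
Definition Sfull m := sumN (fun i => cs2 (PI * INR i / INR m)) m.

Lemma INRn_pos : 0 < INR n.
Proof. apply lt_0_INR; auto. Qed.

Lemma full_split : Sfull (2 * n) = Qs + Secs.
Proof.
  pose proof INRn_pos.
  unfold Sfull. replace (2 * n)%nat with (n + n)%nat by lia. rewrite sumN_split.
  unfold Qs, Secs. f_equal. apply sumN_ext. intros. rewrite plus_INR. replace (INR n + INR n) with (2 * INR n) by ring. reflexivity.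
  apply sumN_ext. intros j _. unfold cs2. rewrite !plus_INR.
  replace (PI * (INR n + INR j) / (INR n + INR n)) with (PI / 2 - (- (PI * INR j / (2 * INR n)))) by (field; lra).
  rewrite sin_shift, cos_neg. reflexivity.
Qed.

Lemma full_evenodd : Sfull (2 * n) = Sfull n + INR n ^ 2.
Proof.
  pose proof INRn_pos.
  unfold Sfull. rewrite sumN_evenodd. rewrite <- (odd_sum n Hn). f_equal.
  apply sumN_ext. intros j _. unfold cs2. rewrite !mult_INR. change (INR 2) with 2.
  replace (PI * (2 * INR j) / (2 * INR n)) with (PI * INR j / INR n) by (field; lra). reflexivity.
  apply sumN_ext. intros j _. unfold cs2. rewrite S_INR, !mult_INR. change (INR 2) with 2. reflexivity.
Qed.

Lemma sec_refl : Secs = 1 + Qs.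
Proof.
  pose proof INRn_pos.
  unfold Secs. rewrite sumN_rev.
  rewrite (sumN_ext _ (fun j => cs2 (PI * INR (S j) / (2 * INR n)))).
  - pose proof (sumN_shift (fun k => cs2 (PI * INR k / (2 * INR n))) n) as H1.
    cbn [sumN] in H1. fold Qs in H1.
    assert (E0 : cs2 (PI * INR 0 / (2 * INR n)) = 0).
    { unfold cs2. simpl. replace (PI * 0 / (2 * INR n)) with 0 by (field; lra). rewrite sin_0.
      simpl. rewrite Rmult_0_l, Rinv_0. reflexivity. }
    assert (E1 : cs2 (PI * INR n / (2 * INR n)) = 1).
    { unfold cs2. replace (PI * INR n / (2 * INR n)) with (PI/2) by (field; lra). rewrite sin_PI2. simpl. field. }
    rewrite E0, E1 in H1. lra.
  - intros j Hj. unfold cs2. rewrite minus_INR by lia. rewrite S_INR.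
    replace (PI * (INR n - (INR j + 1)) / (2 * INR n)) with (PI / 2 - PI * (INR j + 1) / (2 * INR n)) by (field; lra).
    rewrite cos_shift. reflexivity.
Qed.

Lemma duplication : Sfull n = (Qs + Secs) / 4 - / 4.
Proof.
  pose proof INRn_pos.
  unfold Sfull, Qs, Secs. destruct n as [|m]. lia.
  rewrite !sumN_shift.
  replace (cs2 (PI * INR 0 / INR (S m))) with 0.
  replace (cs2 (PI * INR 0 / (2 * INR (S m)))) with 0.
  replace (/ cos (PI * INR 0 / (2 * INR (S m))) ^ 2) with 1.
  2: { change (INR 0) with 0. replace (PI * 0 / (2 * INR (S m))) with 0 by (field; lra). rewrite cos_0. field. }
  2: { unfold cs2. change (INR 0) with 0. replace (PI * 0 / (2 * INR (S m))) with 0 by (field; lra). rewrite sin_0. simpl. rewrite Rmult_0_l, Rinv_0. reflexivity. }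
  2: { unfold cs2. change (INR 0) with 0. replace (PI * 0 / INR (S m)) with 0 by (field; lra). rewrite sin_0. simpl. rewrite Rmult_0_l, Rinv_0. reflexivity. }
  rewrite (sumN_ext (fun j => cs2 (PI * INR (S j) / INR (S m)))
             (fun j => (cs2 (PI * INR (S j) / (2 * INR (S m))) + / cos (PI * INR (S j) / (2 * INR (S m))) ^ 2) / 4)).
  rewrite (sumN_ext (fun j => (cs2 (PI * INR (S j) / (2 * INR (S m))) + / cos (PI * INR (S j) / (2 * INR (S m))) ^ 2) / 4)
             (fun j => /4 * (cs2 (PI * INR (S j) / (2 * INR (S m))) + / cos (PI * INR (S j) / (2 * INR (S m))) ^ 2))).
  rewrite sumN_scal, sumN_plus. field.
  intros; unfold Rdiv; apply Rmult_comm.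
  intros j Hj. set (x := PI * INR (S j) / (2 * INR (S m))).
  assert (Hx : 0 < x < PI / 2).
  { unfold x. split. apply Rdiv_lt_0_compat. apply Rmult_lt_0_compat. apply PI_RGT_0. apply lt_0_INR; lia. lra.
    apply (Rmult_lt_reg_r (2 * INR (S m))). lra.
    replace (PI * INR (S j) / (2 * INR (S m)) * (2 * INR (S m))) with (PI * INR (S j)) by (field; lra).
    replace (PI / 2 * (2 * INR (S m))) with (PI * INR (S m)) by field.
    apply Rmult_lt_compat_l. apply PI_RGT_0. apply lt_INR; lia. }
  assert (Hs : 0 < sin x) by (apply sin_gt_0; lra).
  assert (Hc : 0 < cos x) by (apply cos_gt_0; lra).
  replace (PI * INR (S j) / INR (S m)) with (2 * x) by (unfold x; field; lra).
  unfold cs2. rewrite sin_2a.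
  assert (Hp : sin x ^2 + cos x^2 = 1) by (pose proof (sin2_cos2 x); unfold Rsqr in *; simpl; lra).
  replace ((/ sin x ^ 2 + / cos x ^ 2) / 4) with ((sin x^2 + cos x^2) / (4 * sin x^2 * cos x^2)) by (field; split; lra).
  rewrite Hp. field. split; lra.
Qed.

Lemma Qs_value : 2 * Qs + 1 = (4 * INR n ^ 2 - 1) / 3.
Proof.
  pose proof full_split. pose proof full_evenodd. pose proof sec_refl. pose proof duplication.
  lra.
Qed.
End Q.

Definition S0 t := PSeries sin_n (t * t).
Definition S1 t := PSeries (PS_decr_1 sin_n) (t * t).
Definition C1 t := PSeries (PS_decr_1 cos_n) (t * t).

Definition UT := fun _ : R => True.
Lemma openUT : open UT. Proof. apply open_true. Qed.

Lemma sm_sq k : smk k UT (fun t => t * t).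
Proof. apply smk_mult. apply openUT. apply smk_id. apply smk_id. Qed.

Lemma sm_ps_sq (a : nat -> R) k : CV_radius a = p_infty -> smk k UT (fun t => PSeries a (t * t)).
Proof.
  intros H. apply (smk_comp k UT UT (PSeries a) (fun t => t * t)); try apply openUT.
  intros; exact I. apply sm_PSeries_inf; auto. apply sm_sq.
Qed.

Lemma S0_sm k : smk k UT S0. Proof. apply sm_ps_sq, sin_radius. Qed.
Lemma S1_sm k : smk k UT S1. Proof. apply sm_ps_sq. rewrite CV_radius_decr_1. apply sin_radius. Qed.
Lemma C1_sm k : smk k UT C1. Proof. apply sm_ps_sq. rewrite CV_radius_decr_1. apply cos_radius. Qed.

Lemma sin_S0 t : sin t = t * S0 t.
Proof. apply sin_PS. Qed.

Lemma S0_S1 t : S0 t = 1 + t * t * S1 t.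
Proof.
  unfold S0, S1. rewrite PSeries_decr_1. unfold sin_n. simpl. field.
  apply CV_radius_inside. rewrite sin_radius. simpl; auto.
Qed.

Lemma cos_C1 t : cos t = 1 + t * t * C1 t.
Proof.
  rewrite cos_PS. unfold C1. rewrite PSeries_decr_1. unfold cos_n. simpl. field.
  apply CV_radius_inside. rewrite cos_radius. simpl; auto.
Qed.

Lemma sin_sm k : smk k UT sin.
Proof.
  apply smk_ext with (f := fun t => t * S0 t). apply openUT. intros; symmetry; apply sin_S0.
  apply smk_mult. apply openUT. apply smk_id. apply S0_sm.
Qed.

Lemma cos_sm k : smk k UT cos.
Proof.
  apply smk_ext with (f := fun t => 1 + t * t * C1 t). apply openUT. intros; symmetry; apply cos_C1.
  apply smk_plus. apply openUT. apply smk_const. apply smk_mult. apply openUT. apply sm_sq. apply C1_sm.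
Qed.

Lemma smk_scale_comp k U G c : open U -> smk k UT G -> smk k U (fun x => G (c * x)).
Proof.
  intros HU HG. apply (smk_comp k U UT G (fun x => c * x)); auto. apply openUT.
  intros; exact I. apply smk_scal. apply smk_id.
Qed.

Lemma smk_UT k U f : smk k UT f -> smk k U f.
Proof. intros H m x Hm Hx. apply H; auto. exact I. Qed.

Lemma S0_0 : S0 0 = 1.
Proof. unfold S0. rewrite Rmult_0_l, PSeries_0. unfold sin_n; simpl. field. Qed.
Lemma S1_0 : S1 0 = - / 6.
Proof. unfold S1. rewrite Rmult_0_l, PSeries_0. unfold PS_decr_1, sin_n; simpl. field. Qed.

Lemma cont_of_smk (f : R -> R) x : smk 0 UT f -> continuous f x.
Proof. intros H. apply exd_cont. apply (smk_0 0 UT f x H I). Qed.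

Lemma open_interval (l u : R) : open (fun x => l < x < u).
Proof. apply (open_and (fun x => l < x) (fun x => x < u)). apply open_gt. apply open_lt. Qed.

Section Main.
Variables (a : R) (f phi : R -> R) (delta r0 : R) (cc : nat -> R).
Hypothesis Ha : 0 < a.
Hypothesis Hper : forall x, f (x + 2 * a) = f x.
Hypothesis Hsm : smooth_off_2aZ f a.
Hypothesis Hd : 0 < delta.
Hypothesis Hr0 : 0 < r0.
Hypothesis Hcc : forall x, Rabs (x - 0) < r0 -> is_pseries cc (x - 0) (phi x).
Hypothesis Hf : forall x, 0 < Rabs x < delta -> f x = phi x / x ^ 2.

Definition c := PI / (2 * a).
Definition g1 x := c ^ 2 / (sin (c * x)) ^ 2.
Definition g2 x := c * cos (c * x) / sin (c * x).
Definition phi0 := phi 0.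
Definition phi1 := cc 1%nat.
Definition rho0 := Derive_n phi 2 0 / 2 - phi0 * c ^ 2 / 3.
Definition rr x := if Req_EM_T (sin (c * x)) 0 then rho0 else f x - phi0 * g1 x - phi1 * g2 x.

Lemma c_pos : 0 < c.
Proof. unfold c. apply Rdiv_lt_0_compat. apply PI_RGT_0. lra. Qed.

Lemma c2a : c * (2 * a) = PI.
Proof. unfold c. field. lra. Qed.

Lemma sin_zero_2aZ x : sin (c * x) = 0 -> exists k : Z, x = 2 * a * IZR k.
Proof.
  intros H. destruct (sin_eq_0_0 _ H) as [k Hk]. exists k.
  pose proof c2a. pose proof c_pos.
  apply (Rmult_eq_reg_l c); [|lra]. rewrite Hk. rewrite <- H0. ring.
Qed.

Lemma sin_2aZ (k : Z) : sin (c * (2 * a * IZR k)) = 0.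
Proof.
  apply sin_eq_0_1. exists k. rewrite <- c2a. ring.
Qed.

Lemma not_2aZ x : sin (c * x) <> 0 -> forall k : Z, x <> 2 * a * IZR k.
Proof. intros H k E. apply H. rewrite E. apply sin_2aZ. Qed.

Lemma sin_shift2a x : sin (c * (x + 2 * a)) = - sin (c * x).
Proof.
  replace (c * (x + 2 * a)) with (c * x + PI) by (rewrite <- c2a; ring).
  rewrite sin_plus, sin_PI, cos_PI. ring.
Qed.

Lemma cos_shift2a x : cos (c * (x + 2 * a)) = - cos (c * x).
Proof.
  replace (c * (x + 2 * a)) with (c * x + PI) by (rewrite <- c2a; ring).
  rewrite cos_plus, sin_PI, cos_PI. ring.
Qed.

Lemma rr_per x : rr (x + 2 * a) = rr x.
Proof.
  unfold rr. rewrite sin_shift2a.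
  destruct (Req_EM_T (- sin (c * x)) 0); destruct (Req_EM_T (sin (c * x)) 0); try lra; auto.
  unfold g1, g2. rewrite Hper, sin_shift2a, cos_shift2a. f_equal. f_equal. f_equal. f_equal. ring.
  f_equal. field. auto.
Qed.

Lemma rr_perZ x (k : Z) : rr (x + 2 * a * IZR k) = rr x.
Proof.
  assert (Hn : forall n : nat, forall x, rr (x + 2 * a * INR n) = rr x).
  { induction n; intro y. simpl. rewrite Rmult_0_r, Rplus_0_r. reflexivity.
    rewrite S_INR. replace (y + 2 * a * (INR n + 1)) with ((y + 2 * a * INR n) + 2 * a) by ring.
    rewrite rr_per. apply IHn. }
  destruct k.
  - simpl. rewrite Rmult_0_r, Rplus_0_r. reflexivity.
  - rewrite <- (positive_nat_Z p), <- INR_IZR_INZ. apply Hn.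
  - change (Z.neg p) with (Z.opp (Z.pos p)). rewrite opp_IZR, <- (positive_nat_Z p), <- INR_IZR_INZ.
    rewrite <- (Hn (Pos.to_nat p) (x + 2 * a * - INR (Pos.to_nat p))). f_equal. ring.
Qed.

Definition Pp x := PSeries (PS_decr_1 (PS_decr_1 cc)) x.
Definition ss x := c * S0 (c * x).
Definition D1 x := c ^ 3 * S1 (c * x).
Definition D2 x := c ^ 3 * x * (S1 (c * x) - C1 (c * x)).
Definition RR x := (Pp x * (ss x * ss x) + phi0 * (ss x + c) * D1 x + phi1 * ss x * D2 x) * / (ss x * ss x).
Definition eps0 := Rmin a (Rmin r0 delta).
Definition U0 := fun x => - eps0 < x < eps0.

Lemma eps0_pos : 0 < eps0.
Proof. unfold eps0. repeat apply Rmin_glb_lt; auto. Qed.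

Lemma U0_abs x : U0 x -> Rabs x < a /\ Rabs x < r0 /\ Rabs x < delta.
Proof.
  unfold U0, eps0. intros [H1 H2].
  pose proof (Rmin_l a (Rmin r0 delta)). pose proof (Rmin_r a (Rmin r0 delta)).
  pose proof (Rmin_l r0 delta). pose proof (Rmin_r r0 delta).
  repeat split; apply Rabs_def1; lra.
Qed.

Lemma sin_ss x : sin (c * x) = x * ss x.
Proof. unfold ss. rewrite sin_S0. ring. Qed.

Lemma ss_D1 x : ss x - c = x * x * D1 x.
Proof. unfold ss, D1. rewrite S0_S1. ring. Qed.

Lemma ss_D2 x : ss x - c * cos (c * x) = x * D2 x.
Proof. unfold ss, D2. rewrite S0_S1, cos_C1. ring. Qed.

Lemma cc_radius x : Rabs x < r0 -> Rbar_lt (Rabs x) (CV_radius cc).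
Proof.
  intros H. apply (CV_radius_from_conv cc r0 phi); auto.
  intros y Hy. replace y with (y - 0) at 1 by ring. apply Hcc. rewrite Rminus_0_r; auto.
Qed.

Lemma phi_PS x : Rabs x < r0 -> phi x = PSeries cc x.
Proof.
  intros H. symmetry. apply is_pseries_unique. replace x with (x - 0) at 1 by ring.
  apply Hcc. rewrite Rminus_0_r; auto.
Qed.

Lemma phi_Pp x : Rabs x < r0 -> phi x = phi0 + x * (phi1 + x * Pp x).
Proof.
  intros H. rewrite phi_PS by auto. unfold phi0, phi1, Pp.
  rewrite (phi_PS 0) by (rewrite Rabs_R0; auto). rewrite PSeries_0.
  rewrite PSeries_decr_1. rewrite PSeries_decr_1. reflexivity.
  apply ex_pseries_decr_1. destruct (Req_dec x 0). left; auto. right. exists (/ x).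
    unfold mult, one; simpl. field; auto.
  apply CV_radius_inside. apply cc_radius; auto.
  apply CV_radius_inside. apply cc_radius; auto.
Qed.

Lemma ss_pos x : Rabs x < a -> 0 < ss x.
Proof.
  intros H. pose proof c_pos as Hc. pose proof c2a as Hca.
  destruct (Req_dec x 0) as [E|E].
  - subst. unfold ss. rewrite Rmult_0_r, S0_0. lra.
  - assert (Hb : Rabs (c * x) < PI).
    { rewrite Rabs_mult, Rabs_right by lra. rewrite <- Hca. 
      apply Rmult_lt_compat_l; auto. lra. }
    pose proof (sin_ss x) as Hs.
    destruct (Rle_lt_dec 0 x).
    + assert (0 < x) by lra. assert (0 < sin (c * x)).
      { apply sin_gt_0. nra. rewrite Rabs_right in Hb; nra. }
      nra.
    + assert (Hn : 0 < sin (- (c * x))).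
      { apply sin_gt_0. nra. rewrite Rabs_left in Hb; nra. }
      rewrite sin_neg in Hn. nra.
Qed.

Lemma D2_0 : D2 0 = 0.
Proof. unfold D2. ring. Qed.

Lemma D1_0 : D1 0 = - c ^ 3 / 6.
Proof. unfold D1. rewrite Rmult_0_r, S1_0. field. Qed.

Lemma ss_0 : ss 0 = c.
Proof. unfold ss. rewrite Rmult_0_r, S0_0. ring. Qed.

Lemma Pp_0 : Pp 0 = cc 2%nat.
Proof. unfold Pp. rewrite PSeries_0. reflexivity. Qed.

Lemma Derive2_phi : Derive_n phi 2 0 = 2 * cc 2%nat.
Proof.
  rewrite (Derive_n_ext_loc phi (PSeries cc)).
  rewrite Derive_n_coef. simpl. ring.
  pose proof (cc_radius 0). rewrite Rabs_R0 in H. apply H; auto.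
  exists (mkposreal r0 Hr0). intros y Hy. apply phi_PS.
  unfold ball in Hy; simpl in Hy; unfold AbsRing_ball, abs, minus, plus, opp in Hy; simpl in Hy.
  replace y with (y + - 0) by ring. exact Hy.
Qed.

Lemma rr_RR x : U0 x -> rr x = RR x.
Proof.
  intros HU. destruct (U0_abs x HU) as [Ha' [Hr' Hd']].
  pose proof (ss_pos x Ha') as Hs. pose proof c_pos as Hc.
  unfold rr. destruct (Req_EM_T (sin (c * x)) 0) as [E|E].
  - rewrite sin_ss in E. assert (x = 0) by nra. subst.
    unfold RR, rho0. rewrite Derive2_phi, D2_0, D1_0, ss_0, Pp_0. field. lra.
  - assert (Hx : x <> 0). { intro; subst. apply E. rewrite Rmult_0_r. apply sin_0. }
    rewrite Hf. 2: split; auto; apply Rabs_pos_lt; auto.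
    rewrite phi_Pp by auto. unfold g1, g2, RR.
    assert (E1 : D1 x = (ss x - c) / (x * x)) by (rewrite ss_D1; field; auto).
    assert (E2 : D2 x = (ss x - c * cos (c * x)) / x) by (rewrite ss_D2; field; auto).
    rewrite E1, E2, sin_ss. field. repeat split; lra.
Qed.

Lemma smk_sub k (U V : R -> Prop) h : (forall x, U x -> V x) -> smk k V h -> smk k U h.
Proof. intros HUV H m x Hm Hx. apply H; auto. Qed.

Lemma openU0 : open U0.
Proof. apply open_interval. Qed.

Lemma RR_smooth k : smk k U0 RR.
Proof.
  pose proof openU0 as HO.
  assert (Hss : smk k U0 ss). { apply smk_UT. apply smk_scal. apply smk_scale_comp. apply openUT. apply S0_sm. }
  assert (HD1 : smk k U0 D1). { apply smk_UT. apply smk_scal. apply smk_scale_comp. apply openUT. apply S1_sm. }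
  assert (HD2 : smk k U0 D2).
  { apply smk_UT. unfold D2. apply smk_mult. apply openUT. apply smk_scal. apply smk_id.
    apply (smk_ext k UT (fun x => S1 (c * x) + (-1) * C1 (c * x))). apply openUT. intros; ring.
    apply smk_plus. apply openUT. apply smk_scale_comp. apply openUT. apply S1_sm.
    apply smk_scal. apply smk_scale_comp. apply openUT. apply C1_sm. }
  assert (HP : smk k U0 Pp).
  { apply (smk_sub k U0 (fun x => Rabs x < r0)). intros x Hx; apply (U0_abs x Hx).
    apply sm_PSeries. intros x Hx. rewrite !CV_radius_decr_1. apply cc_radius; auto. }
  unfold RR. apply smk_mult; auto.
  - apply smk_plus; auto. apply smk_plus; auto.
    + apply smk_mult; auto. apply smk_mult; auto.
    + apply (smk_ext k U0 (fun x => phi0 * ((ss x + c) * D1 x))); auto. intros; ring.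
      apply smk_scal. apply smk_mult; auto. apply smk_plus; auto. apply smk_const.
    + apply (smk_ext k U0 (fun x => phi1 * (ss x * D2 x))); auto. intros; ring.
      apply smk_scal. apply smk_mult; auto.
  - apply smk_inv; auto. intros x Hx. pose proof (ss_pos x (proj1 (U0_abs x Hx))). nra.
    apply smk_mult; auto.
Qed.

Lemma sinc_sm k : smk k UT (fun y => sin (c * y)).
Proof. apply smk_scale_comp. apply openUT. apply sin_sm. Qed.
Lemma cosc_sm k : smk k UT (fun y => cos (c * y)).
Proof. apply smk_scale_comp. apply openUT. apply cos_sm. Qed.

Lemma rr_smooth k x : ex_derive (Derive_n rr k) x.
Proof.
  destruct (Req_EM_T (sin (c * x)) 0) as [E|E].
  - destruct (sin_zero_2aZ x E) as [z Hz].
    set (U := fun y => x - eps0 < y < x + eps0).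
    assert (HU : smk k U rr).
    { apply (smk_ext k U (fun y => rr (y + - x))). apply open_interval.
      intros y _. rewrite Hz. replace y with ((y + - (2 * a * IZR z)) + 2 * a * IZR z) at 2 by ring.
      symmetry. apply rr_perZ.
      apply (smk_comp k U U0 rr (fun y => y + - x)). apply open_interval. apply openU0.
      intros y Hy. unfold U, U0 in *. lra.
      apply (smk_ext k U0 RR). apply openU0. intros; symmetry; apply rr_RR; auto. apply RR_smooth.
      apply smk_plus. apply open_interval. apply smk_id. apply smk_const. }
    apply (HU k x). lia. unfold U. pose proof eps0_pos. lra.
  - assert (Hc : continuous (fun y => sin (c * y)) x) by (apply cont_of_smk, sinc_sm).
    assert (Hl : locally x (fun y => Rabs (sin (c * y) - sin (c * x)) < Rabs (sin (c * x)))).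
    { apply (Hc (fun z => Rabs (z - sin (c * x)) < Rabs (sin (c * x)))). exists (mkposreal _ (Rabs_pos_lt _ E)). intros z Hz. exact Hz. }
    destruct Hl as [del Hdel].
    set (U := fun y => x - del < y < x + del).
    assert (HUs : forall y, U y -> sin (c * y) <> 0).
    { intros y Hy. specialize (Hdel y).
      assert (Hb : ball x del y).
      { unfold ball; simpl; unfold AbsRing_ball, abs, minus, plus, opp; simpl. unfold U in Hy.
        apply Rabs_def1; lra. }
      specialize (Hdel Hb). intro E0. rewrite E0 in Hdel.
      rewrite Rminus_0_l, Rabs_Ropp in Hdel. lra. }
    assert (HO : open U) by apply open_interval.
    assert (HU : smk k U rr).
    { apply (smk_ext k U (fun y => f y + (- phi0) * (c ^ 2 * / (sin (c * y) * sin (c * y)))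
                                 + (- phi1) * (c * (cos (c * y) * / sin (c * y))))); auto.
      intros y Hy. unfold rr. destruct (Req_EM_T (sin (c * y)) 0) as [E0|E0].
      exfalso; apply (HUs y Hy E0). unfold g1, g2. field. auto.
      apply smk_plus; auto. apply smk_plus; auto.
      - intros m y Hm Hy. apply (Hsm y (not_2aZ y (HUs y Hy)) (S m)).
      - apply smk_scal. apply smk_scal. apply smk_inv. exact HO.
        intros y Hy. pose proof (HUs y Hy). apply Rmult_integral_contrapositive; auto.
        apply smk_mult; auto; apply smk_UT; apply sinc_sm.
      - apply smk_scal. apply smk_scal. apply smk_mult; auto. apply smk_UT; apply cosc_sm.
        apply smk_inv. exact HO. exact HUs. apply smk_UT; apply sinc_sm. }
    apply (HU k x). lia. unfold U. destruct del; simpl; lra.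
Qed.

Lemma sum_n_m_sumN (g : nat -> R) N : sum_n_m g 1 N = sumN (fun j => g (S j)) N.
Proof.
  induction N. rewrite sum_n_m_zero by lia. reflexivity.
  rewrite sum_n_Sm by lia. rewrite IHN. reflexivity.
Qed.

Lemma f_decomp x : sin (c * x) <> 0 -> f x = phi0 * g1 x + phi1 * g2 x + rr x.
Proof.
  intros H. unfold rr. destruct (Req_EM_T (sin (c * x)) 0); [contradiction|]. ring.
Qed.

Section Grid.
Variable n : nat.
Hypothesis Hn : (0 < n)%nat.
Let h := a / INR n.

Lemma INRn_pos' : 0 < INR n.
Proof. apply lt_0_INR; auto. Qed.

Lemma ch : c * h = PI / (2 * INR n).
Proof. pose proof INRn_pos'. unfold h, c. field. split; lra. Qed.

Lemma grid_sin k : (1 <= k <= n)%nat -> sin (c * (INR k * h)) <> 0 /\ sin (c * (- (INR k * h))) <> 0.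
Proof.
  intros Hk. pose proof INRn_pos'.
  assert (Hp : 0 < sin (c * (INR k * h))).
  { apply sin_gt_0. rewrite Rmult_comm, Rmult_assoc, (Rmult_comm h), ch.
    apply Rmult_lt_0_compat. apply lt_0_INR; lia. apply Rdiv_lt_0_compat. apply PI_RGT_0. lra.
    replace (c * (INR k * h)) with (INR k * (c * h)) by ring. rewrite ch.
    apply (Rmult_lt_reg_r (2 * INR n)). lra.
    replace (INR k * (PI / (2 * INR n)) * (2 * INR n)) with (PI * INR k) by (field; lra).
    assert (INR k <= INR n) by (apply le_INR; lia). pose proof PI_RGT_0. nra. }
  split. lra. replace (c * - (INR k * h)) with (- (c * (INR k * h))) by ring. rewrite sin_neg. lra.
Qed.

Lemma g1_grid k : g1 (INR k * h) = c ^ 2 * cs2 (PI * INR k / (2 * INR n)).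
Proof.
  unfold g1, cs2. replace (c * (INR k * h)) with (PI * INR k / (2 * INR n)).
  unfold Rdiv at 1. reflexivity.
  replace (c * (INR k * h)) with (INR k * (c * h)) by ring. rewrite ch. field. pose proof INRn_pos'; lra.
Qed.

Lemma g1_even x : g1 (- x) = g1 x.
Proof. unfold g1. replace (c * - x) with (- (c * x)) by ring. rewrite sin_neg. f_equal. ring. Qed.

Lemma g2_odd x : g2 (- x) = - g2 x.
Proof.
  unfold g2. replace (c * - x) with (- (c * x)) by ring. rewrite sin_neg, cos_neg.
  destruct (Req_dec (sin (c * x)) 0) as [E|E]. rewrite E, Ropp_0. unfold Rdiv. rewrite Rinv_0. ring.
  field. auto.
Qed.

Lemma g2_a : g2 (- (INR n * h)) = 0.
Proof.
  unfold g2. replace (c * - (INR n * h)) with (- (PI / 2)).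
  rewrite cos_neg, cos_PI2. unfold Rdiv. ring.
  replace (c * - (INR n * h)) with (- (INR n * (c * h))) by ring. rewrite ch. field. pose proof INRn_pos'; lra.
Qed.

Lemma g1_a : g1 (- (INR n * h)) = c ^ 2.
Proof.
  rewrite g1_even, g1_grid. unfold cs2. replace (PI * INR n / (2 * INR n)) with (PI / 2).
  rewrite sin_PI2. field. field. pose proof INRn_pos'; lra.
Qed.

Lemma nh : INR n * h = a.
Proof. unfold h. field. pose proof INRn_pos'; lra. Qed.

Lemma sumN_last (g : nat -> R) N : (0 < N)%nat -> sumN g N = sumN g (N - 1) + g (N - 1)%nat.
Proof. intros H. destruct N. lia. simpl. replace (N - 0)%nat with N by lia. reflexivity. Qed.

Lemma sumN_shift' (g : nat -> R) N : (0 < N)%nat -> sumN g N = g O + sumN (fun j => g (S j)) (N - 1).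
Proof. intros H. destruct N. lia. rewrite sumN_shift. replace (S N - 1)%nat with N by lia. reflexivity. Qed.

Lemma Qs_shift : Qs n = sumN (fun j => cs2 (PI * INR (S j) / (2 * INR n))) (n - 1).
Proof.
  unfold Qs. rewrite sumN_shift' by auto. unfold cs2 at 1. simpl.
  replace (PI * 0 / (2 * INR n)) with 0 by (field; pose proof INRn_pos'; lra).
  rewrite sin_0. simpl. rewrite Rmult_0_l, Rinv_0. ring.
Qed.

Lemma trap_decomp :
  trap_sum f a n = phi0 * (h * c ^ 2 * (4 * INR n ^ 2 - 1) / 3)
     + h * sumN (fun j => rr (- a + INR j * (2 * a / INR (2 * n)))) (2 * n) - h * rho0.
Proof.
  pose proof INRn_pos' as Hnp.
  unfold trap_sum. fold h. rewrite !sum_n_m_sumN.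
  rewrite (sumN_ext (fun j => f (- (INR (S j) * h))) (fun j => phi0 * g1 (INR (S j) * h) + phi1 * (- g2 (INR (S j) * h)) + rr (- (INR (S j) * h)))).
  2: { intros j Hj. rewrite f_decomp. rewrite g1_even, g2_odd. reflexivity. apply grid_sin. lia. }
  rewrite (sumN_ext (fun j => f (INR (S j) * h)) (fun j => phi0 * g1 (INR (S j) * h) + phi1 * g2 (INR (S j) * h) + rr (INR (S j) * h))).
  2: { intros j Hj. apply f_decomp. apply grid_sin. lia. }
  replace (2 * n)%nat with (n + n)%nat by lia. rewrite sumN_split.
  rewrite (sumN_rev (fun j => rr (- a + INR j * (2 * a / INR (n + n)))) n).
  rewrite (sumN_ext (fun j => rr (- a + INR (n - S j) * (2 * a / INR (n + n)))) (fun j => rr (- (INR (S j) * h)))).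
  2: { intros j Hj. f_equal. rewrite minus_INR by lia. rewrite plus_INR. rewrite <- nh. unfold h. rewrite S_INR. field. lra. }
  rewrite (sumN_ext (fun j => rr (- a + INR (n + j) * (2 * a / INR (n + n)))) (fun j => rr (INR j * h))).
  2: { intros j Hj. f_equal. rewrite !plus_INR. rewrite <- nh. unfold h. field. lra. }
  rewrite (sumN_shift' (fun j => rr (INR j * h))) by auto.
  replace (rr (INR 0 * h)) with rho0.
  2: { unfold rr. simpl. rewrite Rmult_0_l, Rmult_0_r, sin_0. destruct (Req_EM_T 0 0); [reflexivity|lra]. }
  rewrite !sumN_plus, !sumN_scal.
  rewrite (sumN_last (fun j => g1 (INR (S j) * h)) n) by auto.
  rewrite (sumN_ext (fun j => - g2 (INR (S j) * h)) (fun j => (-1) * g2 (INR (S j) * h))) by (intros; ring).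
  rewrite sumN_scal.
  rewrite (sumN_last (fun j => g2 (INR (S j) * h)) n) by auto.
  replace (S (n - 1)) with n by lia.
  rewrite <- g1_even, g1_a.
  assert (Hg2 : g2 (INR n * h) = 0).
  { replace (INR n * h) with (- (- (INR n * h))) by ring. rewrite g2_odd, g2_a. ring. }
  rewrite Hg2.
  rewrite (sumN_ext (fun j => g1 (INR (S j) * h)) (fun j => c ^ 2 * cs2 (PI * INR (S j) / (2 * INR n)))).
  2: { intros; apply g1_grid. }
  rewrite sumN_scal, <- Qs_shift.
  pose proof (Qs_value n Hn) as HQ.
  replace (c ^ 2 * Qs n) with (c ^ 2 * ((4 * INR n ^ 2 - 1) / 3 - 1) / 2) by (rewrite <- HQ; field).
  field.
Qed.
End Grid.

Lemma sin_pos_int x : 0 < x <= a -> 0 < sin (c * x).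
Proof.
  intros H. pose proof c_pos. pose proof c2a. apply sin_gt_0. nra.
  assert (c * x <= c * a) by (apply Rmult_le_compat_l; lra). nra.
Qed.

Lemma G1_der x : sin (c * x) <> 0 -> is_derive (fun x => - c * cos (c * x) / sin (c * x)) x (g1 x).
Proof.
  intros H. unfold g1. auto_derive. auto.
  pose proof (sin2_cos2 (c * x)). unfold Rsqr in H0.
  replace (c ^ 2 / sin (c * x) ^ 2) with (c ^ 2 * (sin (c * x) * sin (c * x) + cos (c * x) * cos (c * x)) / sin (c * x) ^ 2) by (rewrite H0; field; auto).
  field; auto.
Qed.

Lemma g1_exd x : sin (c * x) <> 0 -> ex_derive g1 x.
Proof. intros H. unfold g1. auto_derive. auto. Qed.
Lemma g2_exd x : sin (c * x) <> 0 -> ex_derive g2 x.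
Proof. intros H. unfold g2. auto_derive. auto. Qed.

Lemma RInt_g1_pos e : 0 < e < a -> RInt g1 e a = c * cos (c * e) / sin (c * e).
Proof.
  intros He. Req. rewrite (RInt_der (fun x => - c * cos (c * x) / sin (c * x))).
  replace (c * a) with (PI / 2) by (unfold c; field; lra). rewrite cos_PI2, sin_PI2. field.
  apply Rgt_not_eq, sin_pos_int; lra.
  - intros x Hx. rewrite Rmin_left, Rmax_right in Hx by lra. apply G1_der. apply Rgt_not_eq, sin_pos_int; lra.
  - intros x Hx. rewrite Rmin_left, Rmax_right in Hx by lra. apply exd_cont, g1_exd. apply Rgt_not_eq, sin_pos_int; lra.
Qed.

Lemma RInt_g1_neg e : 0 < e < a -> RInt g1 (- a) (- e) = c * cos (c * e) / sin (c * e).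
Proof.
  intros He. Req.
  assert (Hs : forall x, - a <= x <= - e -> sin (c * x) <> 0).
  { intros x Hx. replace (c * x) with (- (c * (- x))) by ring. rewrite sin_neg.
    pose proof (sin_pos_int (- x)). lra. }
  rewrite (RInt_der (fun x => - c * cos (c * x) / sin (c * x))).
  replace (c * - a) with (- (PI / 2)) by (unfold c; field; lra).
  replace (c * - e) with (- (c * e)) by ring.
  rewrite !cos_neg, !sin_neg, cos_PI2, sin_PI2. field.
  apply Rgt_not_eq, sin_pos_int; lra.
  - intros x Hx. rewrite Rmin_left, Rmax_right in Hx by lra. apply G1_der. apply Hs; lra.
  - intros x Hx. rewrite Rmin_left, Rmax_right in Hx by lra. apply exd_cont, g1_exd. apply Hs; lra.
Qed.

Lemma RInt_g2_pos e : 0 < e < a -> RInt g2 e a = - ln (sin (c * e)).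
Proof.
  intros He. Req. rewrite (RInt_der (fun x => ln (sin (c * x)))).
  replace (c * a) with (PI / 2) by (unfold c; field; lra). rewrite sin_PI2, ln_1. ring.
  - intros x Hx. rewrite Rmin_left, Rmax_right in Hx by lra. unfold g2. auto_derive.
    apply sin_pos_int; lra. field. apply Rgt_not_eq, sin_pos_int; lra.
  - intros x Hx. rewrite Rmin_left, Rmax_right in Hx by lra. apply exd_cont, g2_exd. apply Rgt_not_eq, sin_pos_int; lra.
Qed.

Lemma RInt_g2_neg e : 0 < e < a -> RInt g2 (- a) (- e) = ln (sin (c * e)).
Proof.
  intros He. Req.
  assert (Hs : forall x, - a <= x <= - e -> 0 < - sin (c * x)).
  { intros x Hx. replace (c * x) with (- (c * (- x))) by ring. rewrite sin_neg.
    pose proof (sin_pos_int (- x)). lra. }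
  rewrite (RInt_der (fun x => ln (- sin (c * x)))).
  replace (c * - a) with (- (PI / 2)) by (unfold c; field; lra).
  replace (c * - e) with (- (c * e)) by ring.
  rewrite !sin_neg, sin_PI2, Ropp_involutive, Ropp_involutive, ln_1. ring.
  - intros x Hx. rewrite Rmin_left, Rmax_right in Hx by lra. unfold g2. auto_derive.
    apply Hs; lra. field. pose proof (Hs x ltac:(lra)). lra.
  - intros x Hx. rewrite Rmin_left, Rmax_right in Hx by lra. apply exd_cont, g2_exd.
    pose proof (Hs x ltac:(lra)). lra.
Qed.

Lemma rr_cont x : continuous rr x.
Proof. apply exd_cont. apply (rr_smooth 0). Qed.

Lemma ex_RInt_rr u v : ex_RInt rr u v.
Proof. apply ex_RInt_cont_all. apply rr_cont. Qed.

Lemma exR_der (g : R -> R) u v : u <= v -> (forall x, u <= x <= v -> ex_derive g x) -> ex_RInt g u v.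
Proof.
  intros Huv H. apply (@ex_RInt_continuous R_CompleteNormedModule). intros z Hz.
  rewrite Rmin_left, Rmax_right in Hz by lra. apply exd_cont; auto.
Qed.

Lemma fp_expr e : 0 < e < a ->
  RInt f (- a) (- e) + RInt f e a - 2 * phi0 / e
  = 2 * phi0 * (c * cos (c * e) / sin (c * e) - 1 / e) + (RInt rr (- a) a - RInt rr (- e) e).
Proof.
  intros He. Req.
  assert (Hp : forall x, e <= x <= a -> sin (c * x) <> 0) by (intros; apply Rgt_not_eq, sin_pos_int; lra).
  assert (Hn : forall x, - a <= x <= - e -> sin (c * x) <> 0).
  { intros x Hx. replace (c * x) with (- (c * (- x))) by ring. rewrite sin_neg.
    pose proof (sin_pos_int (- x)). lra. }
  assert (E1 : RInt f e a = phi0 * RInt g1 e a + phi1 * RInt g2 e a + RInt rr e a).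
  { rewrite (RInt_ext f (fun x => (phi0 * g1 x + phi1 * g2 x) + rr x)).
    rewrite RInt_plusR, RInt_plusR, !RInt_scalR. reflexivity.
    all: try apply ex_RInt_rr.
    6: intros x Hx; rewrite Rmin_left, Rmax_right in Hx by lra; apply f_decomp, Hp; lra.
    all: apply exR_der; [lra| intros x Hx].
    all: assert (Hx' : sin (c * x) <> 0) by (apply Hp; lra).
    1: apply g2_exd; exact Hx'.
    1: apply g1_exd; exact Hx'.
    1: apply (ex_derive_scal g1); apply g1_exd; exact Hx'.
    1: apply (ex_derive_scal g2); apply g2_exd; exact Hx'.
    apply (exd_plus (fun x => phi0 * g1 x) (fun x => phi1 * g2 x)).
    apply (ex_derive_scal g1); apply g1_exd; exact Hx'.
    apply (ex_derive_scal g2); apply g2_exd; exact Hx'. }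
  assert (E2 : RInt f (- a) (- e) = phi0 * RInt g1 (- a) (- e) + phi1 * RInt g2 (- a) (- e) + RInt rr (- a) (- e)).
  { rewrite (RInt_ext f (fun x => (phi0 * g1 x + phi1 * g2 x) + rr x)).
    rewrite RInt_plusR, RInt_plusR, !RInt_scalR. reflexivity.
    all: try apply ex_RInt_rr.
    6: intros x Hx; rewrite Rmin_left, Rmax_right in Hx by lra; apply f_decomp, Hn; lra.
    all: apply exR_der; [lra| intros x Hx].
    all: assert (Hx' : sin (c * x) <> 0) by (apply Hn; lra).
    1: apply g2_exd; exact Hx'.
    1: apply g1_exd; exact Hx'.
    1: apply (ex_derive_scal g1); apply g1_exd; exact Hx'.
    1: apply (ex_derive_scal g2); apply g2_exd; exact Hx'.
    apply (exd_plus (fun x => phi0 * g1 x) (fun x => phi1 * g2 x)).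
    apply (ex_derive_scal g1); apply g1_exd; exact Hx'.
    apply (ex_derive_scal g2); apply g2_exd; exact Hx'. }
  rewrite E1, E2, RInt_g1_pos, RInt_g1_neg, RInt_g2_pos, RInt_g2_neg by auto.
  assert (Ch : RInt rr (- a) a = RInt rr (- a) (- e) + RInt rr (- e) e + RInt rr e a).
  { rewrite <- (@RInt_Chasles R_CompleteNormedModule rr (- a) (- e) a) by apply ex_RInt_rr.
    rewrite <- (@RInt_Chasles R_CompleteNormedModule rr (- e) e a) by apply ex_RInt_rr.
    unfold plus; simpl. ring. }
  rewrite Ch. field. pose proof (sin_pos_int e ltac:(lra)). split; apply Rgt_not_eq; lra.
Qed.

Definition Kf e := c * (c * e) * (C1 (c * e) - S1 (c * e)) * / S0 (c * e).

Lemma Kf_eq e : 0 < e < a -> c * cos (c * e) / sin (c * e) - 1 / e = Kf e.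
Proof.
  intros He. pose proof (sin_pos_int e ltac:(lra)) as Hs. pose proof c_pos.
  unfold Kf. rewrite sin_S0 in *. rewrite cos_C1. rewrite (S0_S1 (c * e)) in *.
  assert (0 < c * e) by nra.
  assert (0 < 1 + c * e * (c * e) * S1 (c * e)).
  { apply (Rmult_lt_reg_l (c * e)); auto. lra. }
  field. repeat split; lra.
Qed.

Lemma Kf_cont : continuous Kf 0.
Proof.
  apply exd_cont. unfold Kf.
  assert (Hdd : forall g : R -> R, smk 0 UT g -> ex_derive (fun x => g (c * x)) 0).
  { intros g Hg. apply ex_derive_comp. apply (smk_0 0 UT g _ Hg I). auto_derive; auto. }
  apply ex_derive_mult. apply ex_derive_mult. auto_derive; auto.
  apply exd_minus; apply Hdd. apply C1_sm. apply S1_sm.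
  apply ex_derive_inv. apply Hdd. apply S0_sm. rewrite Rmult_0_r, S0_0. lra.
Qed.

Lemma Kf_0 : Kf 0 = 0.
Proof. unfold Kf. ring. Qed.

Lemma hadamard : is_hadamard_fp f a (phi 0) (RInt rr (- a) a).
Proof.
  unfold is_hadamard_fp. apply filterlim_locally. intros eps.
  destruct (cont_bound rr (- a) a) as [M HM]. lra. apply rr_cont.
  assert (HM0 : 0 <= M) by (pose proof (HM 0 ltac:(lra)); pose proof (Rabs_pos (rr 0)); lra).
  set (e1 := eps / (2 * (2 * Rabs phi0 + 1))).
  assert (He1 : 0 < e1) by (unfold e1; apply Rdiv_lt_0_compat; [apply cond_pos| pose proof (Rabs_pos phi0); lra]).
  assert (HK := Kf_cont (fun z => Rabs (z - Kf 0) < e1)).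
  assert (HL : locally 0 (fun z => Rabs (Kf z - Kf 0) < e1)).
  { apply HK. exists (mkposreal e1 He1). intros z Hz. exact Hz. }
  set (d := Rmin a (eps / (4 * (M + 1)))).
  assert (Hdp : 0 < d).
  { unfold d. apply Rmin_glb_lt; auto. apply Rdiv_lt_0_compat. apply cond_pos. lra. }
  destruct HL as [d1 Hd1].
  unfold at_right, within. exists (mkposreal (Rmin d d1) (Rmin_glb_lt _ _ _ Hdp (cond_pos d1))).
  intros y Hy Hy0. simpl in Hy.
  assert (Hyb : Rabs y < Rmin d d1).
  { unfold ball in Hy; simpl in Hy; unfold AbsRing_ball, abs, minus, plus, opp in Hy; simpl in Hy.
    replace y with (y + - 0) by ring. exact Hy. }
  rewrite Rabs_right in Hyb by lra.
  pose proof (Rmin_l d d1). pose proof (Rmin_r d d1).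
  assert (Hda : d <= a) by apply Rmin_l. assert (Hde : d <= eps / (4 * (M + 1))) by apply Rmin_r.
  assert (Hk : Rabs (Kf y) < e1).
  { rewrite <- (Rminus_0_r (Kf y)), <- Kf_0. apply Hd1.
    unfold ball; simpl; unfold AbsRing_ball, abs, minus, plus, opp; simpl.
    rewrite Ropp_0, Rplus_0_r, Rabs_right by lra. lra. }
  unfold ball; simpl; unfold AbsRing_ball, abs, minus, plus, opp; simpl.
  fold phi0. rewrite fp_expr by (lra). rewrite Kf_eq by (lra).
  assert (HI : Rabs (RInt rr (- y) y) <= (y - - y) * M).
  { apply abs_RInt_le_const. lra. apply ex_RInt_rr. intros t Ht. apply HM. lra. }
  replace (2 * phi0 * Kf y + (RInt rr (- a) a - RInt rr (- y) y) + - RInt rr (- a) a)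
    with (2 * phi0 * Kf y - RInt rr (- y) y) by ring.
  eapply Rle_lt_trans. apply Rabs_triang. rewrite Rabs_Ropp, !Rabs_mult.
  rewrite (Rabs_right 2) by lra.
  assert (Rabs phi0 * Rabs (Kf y) <= Rabs phi0 * e1) by (apply Rmult_le_compat_l; [apply Rabs_pos|lra]).
  assert (Rabs phi0 * e1 * 2 < eps / 2).
  { unfold e1. pose proof (cond_pos eps). pose proof (Rabs_pos phi0).
    apply (Rmult_lt_reg_r (2 * (2 * Rabs phi0 + 1))). lra.
    field_simplify; try lra. }
  assert ((y - - y) * M <= eps / 2).
  { assert (y <= eps / (4 * (M + 1))) by lra.
    pose proof (cond_pos eps).
    assert (y * (4 * (M+1)) <= eps).
    { apply (Rmult_le_reg_r (/ (4 * (M + 1)))). apply Rinv_0_lt_compat; lra.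
      rewrite Rmult_assoc, Rinv_r, Rmult_1_r by lra. exact H3. }
    nra. }
  lra.
Qed.

End Main.

Lemma pow_le_Rpower h k mu : 0 < h <= 1 -> mu <= INR k -> h ^ k <= Rpower h mu.
Proof.
  intros Hh Hk. rewrite <- Rpower_pow by lra.
  replace (INR k) with (mu + (INR k - mu)) by ring. rewrite Rpower_plus.
  assert (H1 : Rpower h (INR k - mu) <= 1).
  { replace 1 with (Rpower 1 (INR k - mu)). apply Rle_Rpower_l; lra.
    unfold Rpower. rewrite ln_1, Rmult_0_r, exp_0. reflexivity. }
  assert (H2 : 0 < Rpower h mu) by (unfold Rpower; apply exp_pos).
  nra.
Qed.

Lemma nat_above (x : R) : exists k : nat, x <= INR k.
Proof.
  destruct (archimed x) as [H1 H2].
  exists (Z.to_nat (up x)). destruct (up x) as [|p|p] eqn:E.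
  - simpl in *. lra.
  - rewrite INR_IZR_INZ, Z2Nat.id by lia. lra.
  - simpl. assert (IZR (Z.neg p) < 0) by (apply IZR_lt; lia). lra.
Qed.

Theorem mainTheorem1 (a : R) (f phi : R -> R) (delta : R) :
  0 < a ->
  (forall x, f (x + 2 * a) = f x) ->
  smooth_off_2aZ f a ->
  0 < delta ->
  analytic_on phi delta ->
  (forall x, 0 < Rabs x < delta -> f x = phi x / x ^ 2) ->
  exists I : R,
    is_hadamard_fp f a (phi 0) I /\
    forall mu : R, 0 < mu ->
      exists C : R, exists N : nat, forall n : nat, (N <= n)%nat -> (0 < n)%nat ->
        let h := a / INR n in
        Rabs (I - (trap_sum f a n - PI ^ 2 / (3 * h) * phi 0
                   + Derive_n phi 2 0 * h / 2))
          <= C * Rpower h mu.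
Proof.
  intros Ha Hper Hsm Hd Han Hf.
  destruct (Han 0) as [r0 [Hr0 [cc Hcc]]]. rewrite Rabs_R0; auto.
  exists (RInt (rr a f phi cc) (- a) a). split.
  { apply (hadamard a f phi delta r0 cc); auto. }
  intros mu Hmu.
  destruct (nat_above mu) as [k Hk].
  destruct (trap_superconv (rr a f phi cc) (2 * a) (- a) k) as [C HC].
  lra. intro x. apply (rr_per a f phi cc); auto.
  intros m x. apply (rr_smooth a f phi delta r0 cc); auto.
  destruct (nat_above a) as [N HN].
  exists (Rabs C), N. intros n HnN Hn h.
  assert (Hnp : 0 < INR n) by (apply lt_0_INR; auto).
  assert (HaN : a <= INR n) by (apply Rle_trans with (INR N); auto; apply le_INR; auto).
  assert (Hh : 0 < h <= 1).
  { unfold h. split. apply Rdiv_lt_0_compat; auto.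
    apply (Rmult_le_reg_r (INR n)); auto. unfold Rdiv. rewrite Rmult_assoc, Rinv_l; lra. }
  rewrite (trap_decomp a f phi cc Ha n Hn).
  fold h.
  specialize (HC (2 * n)%nat ltac:(lia)).
  replace (2 * a / INR (2 * n)) with h in HC by (unfold h; rewrite mult_INR; simpl; field; lra).
  replace (- a + (2 * a)) with a in HC by ring.
  set (E := h * sumN (fun j => rr a f phi cc (- a + INR j * h)) (2 * n) - RInt (rr a f phi cc) (- a) a) in HC.
  replace (RInt (rr a f phi cc) (- a) a -
     (phi0 phi * (h * c a ^ 2 * (4 * INR n ^ 2 - 1) / 3) +
      h * sumN (fun j => rr a f phi cc (- a + INR j * (2 * a / INR (2 * n)))) (2 * n) -
      h * rho0 a phi - PI ^ 2 / (3 * h) * phi 0 + Derive_n phi 2 0 * h / 2))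
    with (- E).
  2: { unfold E. replace (2 * a / INR (2 * n)) with h by (unfold h; rewrite mult_INR; simpl; field; lra).
       unfold rho0, phi0, c, h. field. split; lra. }
  rewrite Rabs_Ropp. eapply Rle_trans. exact HC.
  apply Rle_trans with (Rabs C * h ^ S k).
  apply Rmult_le_compat_r. apply pow_le; lra. apply Rle_abs.
  apply Rmult_le_compat_l. apply Rabs_pos. apply pow_le_Rpower; auto. rewrite S_INR; lra.
Qed.
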